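(* Let $n\geq 3$ and let $V\subset\overline{\Pi}_n$ be the set of partitions $v_k=\{\{1,k\},\{2\},\dots,\widehat{\{k\}},\dots,\{n\}\}$, $k\in\{2,\dots,n\}$ (the block containing $1$ has exactly two elements and all other blocks are singletons). Let $F_0$ be the subposet of the face poset of $\Delta(\overline{\Pi}_n)$ consisting of all simplices having no vertex in $V$. Then there exists an $(S_1\times S_{n-1})$-equivariant acyclic matching on $F_0$ whose only critical simplex is the vertex $\alpha_n=\{\{1\},\{2,\dots,n\}\}$.
   Context: $\Pi_n$ is the poset of set partitions of $[n]$ ordered by refinement (finer is smaller); $\overline{\Pi}_n$ is obtained by removing its minimum and maximum. $\Delta(\overline{\Pi}_n)$ is the order complex: simplices are nonempty chains of $\overline{\Pi}_n$, vertices are elements of $\overline{\Pi}_n$, and the face poset is the set of simplices ordered by inclusion. $S_1\times S_{n-1}=\{\sigma\in S_n\mid \sigma(1)=1\}$ acts naturally (via its action on $[n]$). A partial matching on a poset is a set of pairs $(a,b)$ with $b$ covering $a$, each element in at most one pair; acyclic means no cycle $b_1>a_1<b_2>\dots<b_t>a_t<b_1$, $t\ge 2$, distinct $b_i$, $(a_i,b_i)$ matched; critical elements are unmatched ones; $H$-equivariant means $(a,b)$ matched implies $(ha,hb)$ matched for all $h\in H$. *)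

(* Defs.v *)
(* Points of [n] are 'I_n; the paper's element "1" is the
   ordinal with value 0. *)
From mathcomp Require Import all_boot fingroup perm.
Set Implicit Arguments. Unset Strict Implicit. Unset Printing Implicit Defensive.

Section Partitions.
Variable n : nat.

Definition part_t := {set {set 'I_n}}.
Definition simplex_t := {set part_t}.

Definition is_setpart (P : part_t) : bool := partition P [set: 'I_n].

Definition refines (P Q : part_t) : bool :=
  [forall B in P, exists C in Q, B \subset C].

Definition part_min : part_t := [set [set x] | x : 'I_n].
Definition part_max : part_t := [set [set: 'I_n]].

Definition proper_part (P : part_t) : bool :=
  [&& is_setpart P, P != part_min & P != part_max].

(* simplices of the order complex: nonempty chains of \overline{\Pi}_n *)
Definition is_simplex (c : simplex_t) : bool :=
  [&& c != set0, [forall P in c, proper_part P] &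
      [forall P in c, forall Q in c, refines P Q || refines Q P]].

Definition in_V (P : part_t) : Prop :=
  exists x y : 'I_n, [/\ val x = 0, x != y &
    P = [set [set x; y]] :|: [set [set z] | z in ~: [set x; y]]].

Definition is_alpha (P : part_t) : Prop :=
  exists x : 'I_n, val x = 0 /\ P = [set [set x]; ~: [set x]].

Definition in_F0 (c : simplex_t) : Prop :=
  is_simplex c /\ forall P, P \in c -> ~ in_V P.

Definition covers_F0 (a b : simplex_t) : Prop :=
  [/\ in_F0 a, in_F0 b, a \proper b &
      ~ exists c, [/\ in_F0 c, a \proper c & c \proper b]].

Definition matching_F0 (M : {set simplex_t * simplex_t}) : Prop :=
  (forall p, p \in M -> covers_F0 p.1 p.2) /\
  (forall p q, p \in M -> q \in M ->
     [set p.1; p.2] :&: [set q.1; q.2] != set0 -> p = q).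

(* acyclic: no cycle b_1 > a_1 < b_2 > a_2 < ... < b_t > a_t < b_1 with t >= 2,
   distinct b_i and (a_i,b_i) in M *)
Definition acyclic_F0 (M : {set simplex_t * simplex_t}) : Prop :=
  ~ exists s : seq (simplex_t * simplex_t),
      [/\ 2 <= size s, all (fun p => p \in M) s, uniq (map snd s) &
          forall i, i < size s ->
            (nth (set0, set0) s i).1 \proper
            (nth (set0, set0) s ((i.+1) %% size s)).2].

Definition critical_F0 (M : {set simplex_t * simplex_t}) (c : simplex_t) : Prop :=
  in_F0 c /\ forall p, p \in M -> p.1 != c /\ p.2 != c.

Definition act_part (s : {perm 'I_n}) (P : part_t) : part_t :=
  [set [set s x | x in B] | B : {set 'I_n} in P].
Definition act_simplex (s : {perm 'I_n}) (c : simplex_t) : simplex_t :=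
  [set act_part s P | P in c].

Definition in_S1Sn1 (s : {perm 'I_n}) : Prop :=
  forall i : 'I_n, val i = 0 -> s i = i.

Definition equivariant_F0 (M : {set simplex_t * simplex_t}) : Prop :=
  forall s, in_S1Sn1 s -> forall p, p \in M ->
    (act_simplex s p.1, act_simplex s p.2) \in M.

End Partitions.

(* Main.v *)
Require Import Defs.
From mathcomp Require Import all_boot fingroup perm.
Set Implicit Arguments. Unset Strict Implicit. Unset Printing Implicit Defensive.

Section Main.
Variable n : nat.

Lemma setpartP (P : part_t n) : is_setpart P <->
  [/\ set0 \notin P, forall x, exists2 B, B \in P & x \in B &
      forall B C x, B \in P -> C \in P -> x \in B -> x \in C -> B = C].
Proof.
split.
- move=> hP; have tP := partition_trivIset hP.
  split; first by rewrite (partition0 hP).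
  + move=> x; exists (pblock P x); last by rewrite mem_pblock (cover_partition hP) inE.
    by apply: pblock_mem; rewrite (cover_partition hP) inE.
  + move=> B C x BP CP xB xC.
    by rewrite -(def_pblock tP BP xB) -(def_pblock tP CP xC).
- case=> h0 hcov huniq; rewrite /is_setpart /partition h0 andbT.
  apply/andP; split.
  + apply/eqP/setP => x; rewrite inE; apply/bigcupP.
    by case: (hcov x) => B BP xB; exists B.
  + apply/trivIsetP => B C BP CP BC.
    rewrite -setI_eq0; apply/eqP/setP => x; rewrite !inE.
    apply/negP => /andP[xB xC]; move/eqP: BC; apply.
    exact: huniq xB xC.
Qed.
Variable x0 : 'I_n.
Hypothesis hx0 : val x0 = 0.
Hypothesis hn : 2 < n.

Lemma refines_refl (P : part_t n) : refines P P.
Proof. by apply/forall_inP => B BP; apply/exists_inP; exists B. Qed.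

Lemma refines_trans (P Q R : part_t n) : refines P Q -> refines Q R -> refines P R.
Proof.
move=> /forall_inP hPQ /forall_inP hQR; apply/forall_inP => B BP.
case/exists_inP: (hPQ B BP) => C CQ BC.
case/exists_inP: (hQR C CQ) => D DR CD.
by apply/exists_inP; exists D => //; apply: subset_trans CD.
Qed.

Lemma refines_sub (P Q : part_t n) : is_setpart P -> refines Q P -> refines P Q -> P \subset Q.
Proof.
move=> /setpartP[h0 hcov hu] /forall_inP hQP /forall_inP hPQ.
apply/subsetP => B BP.
case/exists_inP: (hPQ B BP) => C CQ BC.
case/exists_inP: (hQP C CQ) => D DP CD.
have: B != set0 by apply: contraNneq h0 => <-.
case/set0Pn => x xB.
have BD : B = D by apply: (hu B D x) => //; apply: (subsetP CD); apply: (subsetP BC).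
suff -> : B = C by [].
by apply/eqP; rewrite eqEsubset BC /= BD.
Qed.

Lemma refines_antisym (P Q : part_t n) : is_setpart P -> is_setpart Q ->
  refines P Q -> refines Q P -> P = Q.
Proof.
move=> hP hQ PQ QP; apply/eqP; rewrite eqEsubset.
by rewrite (refines_sub hP QP PQ) (refines_sub hQ PQ QP).
Qed.

Definition Stype (P : part_t n) := [set x0] \in P.

Lemma Stype_refines (P Q : part_t n) : is_setpart P -> is_setpart Q ->
  refines P Q -> Stype Q -> Stype P.
Proof.
move=> /setpartP[h0 hcov hu] /setpartP[h0' hcov' hu'] /forall_inP PQ SQ.
case: (hcov x0) => B BP xB.
case/exists_inP: (PQ B BP) => C CQ BC.
have CE : C = [set x0] by apply: (hu' C [set x0] x0) => //; [apply: (subsetP BC) | rewrite inE].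
suff BE : B = [set x0] by rewrite /Stype -BE.
apply/eqP; rewrite eqEsubset -CE BC /= CE sub1set //.
Qed.

Definition fiso (P : part_t n) : part_t n :=
  [set [set x0]] :|: ([set B :\ x0 | B in P] :\ set0).

Lemma in_fiso (P : part_t n) D : D \in fiso P =
  (D == [set x0]) || ((D != set0) && (D \in [set B :\ x0 | B in P])).
Proof. by rewrite /fiso !inE. Qed.

Lemma fiso_part (P : part_t n) : is_setpart P -> is_setpart (fiso P).
Proof.
move=> /setpartP[h0 hcov hu]; apply/setpartP; split.
- rewrite in_fiso eqxx andFb orbF; apply/negP => /eqP/setP/(_ x0).
  by rewrite !inE eqxx.
- move=> x; case: (eqVneq x x0) => [->|xx0].
    by exists [set x0]; rewrite ?in_fiso ?eqxx // inE.
  case: (hcov x) => B BP xB; exists (B :\ x0); last by rewrite !inE xx0.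
  rewrite in_fiso; apply/orP; right; apply/andP; split; last exact: imset_f.
  by apply/set0Pn; exists x; rewrite !inE xx0.
- move=> B C x; rewrite !in_fiso.
  case/orP => [/eqP->|/andP[_ /imsetP[B' B'P ->]]];
  case/orP => [/eqP->|/andP[_ /imsetP[C' C'P ->]]] //.
  + by rewrite inE => /eqP-> ; rewrite !inE eqxx.
  + by move=> /[swap]; rewrite inE => /eqP->; rewrite !inE eqxx.
  + move=> /setD1P[xx0 xB] /setD1P[_ xC].
    by rewrite (hu B' C' x).
Qed.

Lemma fiso_refines (P : part_t n) : is_setpart P -> refines (fiso P) P.
Proof.
move=> /setpartP[h0 hcov hu]; apply/forall_inP => D; rewrite in_fiso.
case/orP => [/eqP->|/andP[_ /imsetP[B BP ->]]].
  by case: (hcov x0) => B BP xB; apply/exists_inP; exists B; rewrite // sub1set.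
by apply/exists_inP; exists B => //; apply: subD1set.
Qed.

Lemma fiso_Stype (P : part_t n) : Stype (fiso P).
Proof. by rewrite /Stype in_fiso eqxx. Qed.

Lemma refines_fiso (P Q : part_t n) : is_setpart P -> is_setpart Q -> Stype Q ->
  refines Q P -> refines Q (fiso P).
Proof.
move=> hP /setpartP[h0 hcov hu] SQ /forall_inP QP; apply/forall_inP => B BQ.
case: (boolP (x0 \in B)) => x0B.
  have -> : B = [set x0] by apply: (hu B [set x0] x0) => //; rewrite inE.
  by apply/exists_inP; exists [set x0]; rewrite ?in_fiso ?eqxx.
case/exists_inP: (QP B BQ) => C CP BC.
apply/exists_inP; exists (C :\ x0).
  rewrite in_fiso; apply/orP; right; apply/andP; split; last exact: imset_f.
  have: B != set0 by apply: contraNneq h0 => <-.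
  case/set0Pn => x xB; apply/set0Pn; exists x; rewrite !inE (subsetP BC) // andbT.
  by apply: contraNneq x0B => <-.
apply/subsetP => x xB; rewrite !inE (subsetP BC) // andbT.
by apply: contraNneq x0B => <-.
Qed.

Definition x1 : 'I_n := Ordinal (ltn_trans (isT : 1 < 2) hn).

Lemma x1x0 : x1 != x0.
Proof. by apply/eqP => /(congr1 val); rewrite /= hx0. Qed.

Lemma Stype_ne_max (P : part_t n) : Stype P -> P != part_max n.
Proof.
rewrite /Stype /part_max; apply: contraTneq => -> ; rewrite inE.
apply/negP => /eqP/setP/(_ x1); rewrite !inE (negbTE x1x0) //.
Qed.

Lemma x0E (x : 'I_n) : val x = 0 -> x = x0.
Proof. by move=> h; apply: val_inj; rewrite /= h hx0. Qed.

Lemma V_not_Stype (P : part_t n) : in_V P -> ~~ Stype P.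
Proof.
case=> x [y [/x0E -> xy ->]]; rewrite /Stype; apply/negP; case/setUP.
  rewrite inE => /eqP/setP/(_ y); rewrite !inE eqxx orbT (eq_sym y) (negbTE xy).
  by [].
case/imsetP => z; rewrite !inE => /norP[zx _] /set1_inj zE.
by rewrite zE eqxx in zx.
Qed.

Lemma setD1_id (C : {set 'I_n}) a : a \notin C -> C :\ a = C.
Proof.
move=> aC; apply/setP => x; rewrite !inE; case: eqP => // ->.
by rewrite (negbTE aC).
Qed.

Lemma fiso_ne_min (P : part_t n) : is_setpart P -> ~~ Stype P -> ~ in_V P ->
  fiso P != part_min n.
Proof.
move=> hP NS NV; apply/negP => /eqP fE.
have hsing : forall B, B \in P -> B :\ x0 != set0 -> exists z, B :\ x0 = [set z].
  move=> B BP Bn; have: B :\ x0 \in fiso P.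
    by rewrite in_fiso Bn /=; apply/orP; right; exact: imset_f.
  by rewrite fE => /imsetP[z _ ->]; exists z.
case/setpartP: (hP) => h0 hcov hu.
case: (hcov x0) => B0 B0P x0B0.
have B0n : B0 :\ x0 != set0.
  apply: contra NS => /eqP B0e; rewrite /Stype.
  suff <- : B0 = [set x0] by [].
  by rewrite -(setD1K x0B0) B0e setU0.
case: (hsing B0 B0P B0n) => y B0y.
have B0E : B0 = [set x0; y] by rewrite -(setD1K x0B0) B0y.
have x0y : x0 != y.
  have: y \in B0 :\ x0 by rewrite B0y inE.
  by rewrite !inE => /andP[]; rewrite eq_sym.
apply: NV; exists x0, y; split => //.
apply/setP => C; apply/idP/idP => [CP|].
  case: (boolP (x0 \in C)) => x0C.
    by rewrite (hu C B0 x0) // B0E !inE eqxx.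
  have Cn : C :\ x0 != set0.
    by rewrite setD1_id //; apply: contraNneq h0 => <-.
  case: (hsing C CP Cn) => z; rewrite setD1_id // => CE.
  apply/setUP; right; apply/imsetP; exists z => //.
  rewrite !inE negb_or; apply/andP; split.
    by apply: contraNneq x0C => <-; rewrite CE inE.
  apply/negP => /eqP zy.
  have : C = B0 by apply: (hu C B0 z) => //; rewrite ?CE ?B0E !inE ?zy eqxx ?orbT.
  by move=> CB; rewrite CB x0B0 in x0C.
case/setUP => [|/imsetP[z]].
  by rewrite inE => /eqP->; rewrite -B0E.
rewrite !inE negb_or => /andP[zx zy] ->.
case: (hcov z) => D DP zD.
have x0D : x0 \notin D.
  apply/negP => x0D; have DB : D = B0 by apply: (hu D B0 x0).
  by move: zD; rewrite DB B0E !inE (negbTE zx) (negbTE zy).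
have Dn : D :\ x0 != set0 by apply/set0Pn; exists z; rewrite !inE zx.
case: (hsing D DP Dn) => z'; rewrite setD1_id // => DE.
by move: zD; rewrite DE inE => /eqP zz; rewrite zz -DE.
Qed.

Definition alpha : part_t n := [set [set x0]; ~: [set x0]].

Lemma alpha_part : is_setpart alpha.
Proof.
apply/setpartP; split.
- rewrite !inE negb_or; apply/andP; split; apply/negP => /eqP/setP.
    by move/(_ x0); rewrite !inE eqxx.
  by move/(_ x1); rewrite !inE (negbTE x1x0).
- move=> x; case: (eqVneq x x0) => [->|xx0].
    by exists [set x0]; rewrite !inE eqxx.
  by exists (~: [set x0]); rewrite !inE ?eqxx ?orbT ?xx0.
- move=> B C x; rewrite !inE.
  case/orP=> /eqP-> ; case/orP => /eqP-> //; rewrite !inE.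
    by move=> /eqP->; rewrite eqxx.
  by move=> /[swap] /eqP->; rewrite eqxx.
Qed.

Lemma alpha_Stype : Stype alpha.
Proof. by rewrite /Stype !inE eqxx. Qed.

Lemma alpha_proper : proper_part alpha.
Proof.
rewrite /proper_part alpha_part Stype_ne_max ?alpha_Stype // andbT /=.
apply/negP => /eqP aE.
have : ~: [set x0] \in alpha by rewrite !inE eqxx orbT.
rewrite aE => /imsetP[z _ zE].
have := cardsC1 x0; rewrite zE cards1 card_ord => h.
by move: hn; rewrite -(prednK (ltn_trans (isT : 0 < 2) hn)) -h.
Qed.

Lemma alpha_notV : ~ in_V alpha.
Proof. by move/V_not_Stype; rewrite alpha_Stype. Qed.

Lemma refines_alpha (Q : part_t n) : is_setpart Q -> Stype Q -> refines Q alpha.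
Proof.
move=> /setpartP[h0 hcov hu] SQ; apply/forall_inP => B BQ; apply/exists_inP.
case: (boolP (x0 \in B)) => x0B.
  exists [set x0]; first by rewrite !inE eqxx.
  by rewrite (hu B [set x0] x0) // inE.
exists (~: [set x0]); first by rewrite !inE eqxx orbT.
apply/subsetP => x xB; rewrite !inE; apply: contraNneq x0B => <- //.
Qed.

Lemma fiso_proper (P : part_t n) : is_setpart P -> ~~ Stype P -> ~ in_V P ->
  proper_part (fiso P).
Proof.
move=> hP NS NV; rewrite /proper_part fiso_part // fiso_ne_min //.
by rewrite Stype_ne_max // fiso_Stype.
Qed.

Lemma Stype_notV (P : part_t n) : Stype P -> ~ in_V P.
Proof. by move=> SP /V_not_Stype; rewrite SP. Qed.

Lemma seq_min (T : eqType) (r : rel T) (s : seq T) : (forall x, r x x) ->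
  (forall x y z, r x y -> r y z -> r x z) ->
  {in s &, forall x y, r x y || r y x} -> s != [::] ->
  exists2 m, m \in s & {in s, forall y, r m y}.
Proof.
move=> hrefl htr; elim: s => [|x s IH] // htot _.
case: (eqVneq s [::]) => [->|sn].
  by exists x; rewrite ?inE // => y; rewrite inE => /eqP->.
have htot' : {in s &, forall x y, r x y || r y x}.
  by move=> a b ha hb; apply: htot; rewrite inE ?ha ?hb orbT.
case: (IH htot' sn) => m ms hm.
have mxs : m \in x :: s by rewrite inE ms orbT.
case/orP: (htot x m (mem_head _ _) mxs) => hxm.
  exists x; first exact: mem_head.
  move=> y; rewrite inE => /orP[/eqP->//|ys]; exact: htr hxm (hm y ys).
exists m; first exact: mxs.
by move=> y; rewrite inE => /orP[/eqP->//|ys]; exact: hm.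
Qed.

Definition Nset (c : simplex_t n) : simplex_t n := [set P in c | ~~ Stype P].
Definition minpred (X : simplex_t n) (P : part_t n) :=
  (P \in X) && [forall Q in X, refines P Q].
Definition wN (X : simplex_t n) : part_t n :=
  if [pick P | minpred X P] is Some P then fiso P else alpha.
Definition w (c : simplex_t n) := wN (Nset c).

Lemma w_Stype c : Stype (w c).
Proof. by rewrite /w /wN; case: pickP => [P _|_]; rewrite ?fiso_Stype ?alpha_Stype. Qed.

Lemma Nset_addS c Q : Stype Q -> Nset (Q |: c) = Nset c.
Proof.
move=> SQ; apply/setP => P; rewrite !inE.
by case: eqP => [->|]; rewrite ?SQ ?andbF ?orbF.
Qed.

Lemma Nset_delS c Q : Stype Q -> Nset (c :\ Q) = Nset c.
Proof.
move=> SQ; apply/setP => P; rewrite !inE.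
by case: eqP => [->|]; rewrite ?SQ ?andbF.
Qed.

Lemma simplexP (c : simplex_t n) : is_simplex c <->
  [/\ c != set0, forall P, P \in c -> proper_part P &
      forall P Q, P \in c -> Q \in c -> refines P Q || refines Q P].
Proof.
rewrite /is_simplex; split.
  case/and3P => c0 /forall_inP hp /forall_inP hc; split => // P Q Pc Qc.
  by move: (hc P Pc) => /forall_inP; apply.
case=> c0 hp hc; rewrite c0 /=; apply/andP; split; apply/forall_inP => // P Pc.
by apply/forall_inP => Q Qc; apply: hc.
Qed.

Lemma proper_setpart (P : part_t n) : proper_part P -> is_setpart P.
Proof. by case/and3P. Qed.

Lemma w_F0 c : in_F0 c -> [/\ proper_part (w c), ~ in_V (w c) &
  forall R, R \in c -> refines R (w c) || refines (w c) R].
Proof.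
case=> /simplexP[c0 hp hc] hV; split; last first.
- move=> R Rc; rewrite /w /wN; case: pickP => [P /andP[] | hnone].
  + rewrite inE => /andP[Pc NP] /forall_inP Pmin.
    case: (boolP (Stype R)) => SR.
      case/orP: (hc R P Rc Pc) => RP.
        by rewrite refines_fiso ?proper_setpart ?hp.
      by move: NP; rewrite (Stype_refines _ _ RP SR) // proper_setpart ?hp.
    apply/orP; right; apply: refines_trans (fiso_refines _) (Pmin R _).
      by rewrite proper_setpart ?hp.
    by rewrite inE Rc.
  + case: (boolP (Stype R)) => SR; first by rewrite refines_alpha ?proper_setpart ?hp.
    have nonE: enum (Nset c) != [::].
      apply/eqP => /(congr1 size); rewrite -cardE => /eqP.
      rewrite cards_eq0 => /eqP/setP/(_ R); rewrite !inE Rc SR //.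
    have htot : {in enum (Nset c) &, forall a b, refines a b || refines b a}.
      move=> a b; rewrite !mem_enum !inE => /andP[ac _] /andP[bc _]; exact: hc.
    have [m] := @seq_min _ (@refines n) _ (@refines_refl) (@refines_trans) htot nonE.
    rewrite mem_enum => mX hm.
    move: (hnone m); rewrite /minpred mX /= => /negP; case.
    by apply/forall_inP => Q QX; apply: hm; rewrite mem_enum.
- rewrite /w /wN; case: pickP => [P /andP[] | _]; last exact: alpha_notV.
  by rewrite inE => /andP[Pc NP] _; apply: Stype_notV; exact: fiso_Stype.
- rewrite /w /wN; case: pickP => [P /andP[] | _]; last exact: alpha_proper.
  rewrite inE => /andP[Pc NP] _; apply: fiso_proper => //; first by rewrite proper_setpart ?hp.
  exact: hV.
Qed.

Definition inVb (P : part_t n) : bool :=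
  [exists x : 'I_n, exists y : 'I_n, [&& val x == 0, x != y &
    P == [set [set x; y]] :|: [set [set z] | z in ~: [set x; y]]]].

Lemma inVP P : reflect (in_V P) (inVb P).
Proof.
apply: (iffP existsP) => [[x /existsP[y /and3P[/eqP h1 h2 /eqP h3]]] | [x [y [h1 h2 h3]]]].
  by exists x, y.
by exists x; apply/existsP; exists y; apply/and3P; split => //; apply/eqP.
Qed.

Definition inF0b (c : simplex_t n) : bool := is_simplex c && [forall P in c, ~~ inVb P].

Lemma inF0P c : reflect (in_F0 c) (inF0b c).
Proof.
apply: (iffP andP) => [[hs /forall_inP hv]|[hs hv]]; split => //.
  by move=> P Pc /inVP; apply/negP; apply: hv.
by apply/forall_inP => P Pc; apply/inVP; apply: hv.
Qed.

Lemma F0_add c : in_F0 c -> in_F0 (w c |: c).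
Proof.
move=> hc; have [wp wV wc] := w_F0 hc.
case: hc => /simplexP[c0 hp hch] hV; split.
  apply/simplexP; split.
  - by apply/set0Pn; exists (w c); rewrite !inE eqxx.
  - by move=> P; rewrite !inE => /orP[/eqP->|]; [|apply: hp].
  - move=> P Q; rewrite !inE => /orP[/eqP->|Pc] /orP[/eqP->|Qc].
    + by rewrite refines_refl.
    + by rewrite orbC wc.
    + exact: wc.
    + exact: hch.
by move=> P; rewrite !inE => /orP[/eqP->|]; [|apply: hV].
Qed.

Lemma F0_sub (c d : simplex_t n) : in_F0 c -> d \subset c -> d != set0 -> in_F0 d.
Proof.
case=> /simplexP[c0 hp hch] hV dc d0; split.
  apply/simplexP; split => // [P Pd|P Q Pd Qd].
    exact/hp/(subsetP dc).
  by apply: hch; apply: (subsetP dc).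
by move=> P Pd; apply/hV/(subsetP dc).
Qed.

Lemma w_add c : w (w c |: c) = w c.
Proof. by rewrite /w Nset_addS // w_Stype. Qed.

Lemma w_del c : w (c :\ w c) = w c.
Proof. by rewrite /w Nset_delS // w_Stype. Qed.

Lemma covers_w a : in_F0 a -> w a \notin a -> covers_F0 a (w a |: a).
Proof.
move=> ha wa.
have cb : #|w a |: a| = #|a|.+1 by rewrite cardsU1 wa.
split => //; first exact: F0_add.
  by rewrite properEcard subsetUr cb ltnSn.
case=> c [_ ac cb'].
move: (proper_card ac) (proper_card cb'); rewrite cb => h1 h2.
by move: (leq_ltn_trans h1 h2); rewrite ltnn.
Qed.

Definition Mset : {set simplex_t n * simplex_t n} :=
  [set p | [&& inF0b p.1, p.2 == w p.1 |: p.1 & w p.1 \notin p.1]].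

Lemma inM a b : (a, b) \in Mset <-> [/\ in_F0 a, b = w a |: a & w a \notin a].
Proof.
rewrite inE /=; split.
  by case/and3P => /inF0P h1 /eqP h2 h3.
by case=> /inF0P h1 h2 h3; rewrite h1 h2 eqxx h3.
Qed.

Lemma Mset_matching : matching_F0 Mset.
Proof.
split.
  by case=> a b /inM[ha -> hw]; apply: covers_w.
case=> a b [a' b'] /inM[ha -> hw] /inM[ha' -> hw'] /=.
case/set0Pn => x; rewrite !inE => /andP[].
have key : forall c d, in_F0 c -> in_F0 d -> w c \notin c -> w d \notin d ->
  c = w d |: d -> False.
  move=> c d _ _ wc _ cE; move: wc; rewrite cE w_add !inE eqxx //.
case/orP => /eqP-> /orP[] /eqP.
- by move->.
- by move=> E; case: (key _ _ ha ha' hw hw' E).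
- by move=> E; case: (key _ _ ha' ha hw' hw (esym E)).
- move=> E.
  have ww : w a = w a' by rewrite -w_add E w_add.
  have aa : a = a'.
    by rewrite -(setU1K hw) -(setU1K hw') E ww.
  by rewrite aa.
Qed.

Lemma cyc_sub (T : finType) (f : nat -> {set T}) t : 0 < t ->
  (forall i, i < t -> f i \subset f (i.+1 %% t)) ->
  forall i j, i < t -> j < t -> f i \subset f j.
Proof.
move=> t0 hf.
have H : forall k i, i < t -> f i \subset f ((i + k) %% t).
  elim=> [|k IH] i it; first by rewrite addn0 modn_small.
  apply: subset_trans (IH i it) _.
  have -> : (i + k.+1) %% t = ((i + k) %% t).+1 %% t.
    by rewrite -(addn1 ((i + k) %% t)) modnDml addn1 addnS.
  by apply: hf; rewrite ltn_pmod.
move=> i j it jt; move: (H (t - i + j) i it).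
by rewrite addnA subnKC ?(ltnW it) // -modnDml modnn add0n modn_small.
Qed.

Lemma Nset_sub (c d : simplex_t n) : c \subset d -> Nset c \subset Nset d.
Proof.
move=> cd; apply/subsetP => P; rewrite !inE => /andP[Pc ->].
by rewrite (subsetP cd).
Qed.

Lemma Mset_acyclic : acyclic_F0 Mset.
Proof.
case=> s [s2 /allP sM us hcyc].
set t := size s.
have t0 : 0 < t by apply: leq_trans s2.
pose a i := (nth (set0, set0) s i).1.
pose b i := (nth (set0, set0) s i).2.
have hab : forall i, i < t -> [/\ in_F0 (a i), b i = w (a i) |: a i & w (a i) \notin a i].
  move=> i it; apply/inM; rewrite /a /b -surjective_pairing.
  by apply: sM; rewrite mem_nth.
have NE : forall i, i < t -> Nset (b i) = Nset (a i).
  by move=> i it; case: (hab i it) => _ -> _; rewrite Nset_addS // w_Stype.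
have hN : forall i j, i < t -> j < t -> Nset (b i) \subset Nset (b j).
  apply: cyc_sub => // i it.
  rewrite NE //; apply: Nset_sub; apply: proper_sub; exact: hcyc.
have wE : forall i, i < t -> w (a i) = w (a 0).
  move=> i it; rewrite /w -!NE //.
  by congr wN; apply/eqP; rewrite eqEsubset !hN.
have hb : forall i j, i < t -> j < t -> b i \subset b j.
  apply: cyc_sub => // i it.
  have it1 : i.+1 %% t < t by rewrite ltn_pmod.
  case: (hab i it) => _ -> _; case: (hab _ it1) => _ -> _.
  rewrite wE // (wE _ it1) subUset sub1set setU11 /=.
  have := proper_sub (hcyc i it).
  by rewrite -/(a i) -/(b (i.+1 %% t)); case: (hab _ it1) => _ -> _; rewrite (wE _ it1).
have b01 : b 0 = b 1 by apply/eqP; rewrite eqEsubset !hb.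
move: us => /uniqP => /(_ set0 0 1).
rewrite !inE size_map -/t => /(_ t0 s2).
by rewrite !(nth_map (set0, set0)) // => /(_ b01).
Qed.

Lemma wN0 : wN set0 = alpha.
Proof. by rewrite /wN; case: pickP => // P; rewrite /minpred inE. Qed.

Lemma is_alphaE P : is_alpha P <-> P = alpha.
Proof.
split; first by case=> x [/x0E -> ->].
by move->; exists x0.
Qed.

Lemma w_alpha : w [set alpha] = alpha.
Proof.
rewrite /w (_ : Nset _ = set0) ?wN0 //; apply/setP => P; rewrite !inE.
by case: eqP => // ->; rewrite alpha_Stype.
Qed.

Lemma alpha_F0 : in_F0 [set alpha].
Proof.
split; last by move=> P; rewrite inE => /eqP->; apply: alpha_notV.
apply/simplexP; split.
- by apply/set0Pn; exists alpha; rewrite inE.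
- by move=> P; rewrite inE => /eqP->; apply: alpha_proper.
- by move=> P Q; rewrite !inE => /eqP-> /eqP->; rewrite refines_refl.
Qed.

Lemma Mset_critical c : critical_F0 Mset c <-> exists P, is_alpha P /\ c = [set P].
Proof.
split.
- case=> hc hM.
  case: (boolP (w c \in c)) => wc; last first.
    have : (c, w c |: c) \in Mset by apply/inM.
    by move/hM => [] /=; rewrite eqxx.
  case: (eqVneq (c :\ w c) set0) => c0.
    have cE : c = [set w c].
      apply/setP => P; rewrite inE; apply/idP/eqP => [Pc|->//].
      by apply/eqP; apply: contraT => Pw; move/setP: c0 => /(_ P); rewrite !inE Pw Pc.
    exists alpha; split; first by apply/is_alphaE.
    have wa : w c = alpha.
      rewrite {1}cE /w (_ : Nset _ = set0) ?wN0 //; apply/setP => P; rewrite !inE.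
      by case: eqP => // ->; rewrite w_Stype.
    by rewrite {1}cE wa.
  have : (c :\ w c, c) \in Mset.
    apply/inM; rewrite w_del setD1K // setD11; split => //.
    by apply: F0_sub hc _ c0; apply: subD1set.
  by move/hM => [_] /=; rewrite eqxx.
- case=> P [/is_alphaE -> ->]; split; first exact: alpha_F0.
  case=> a b /inM[ha -> hw] /=.
  have aA : a != [set alpha].
    by apply: contraNneq hw => ->; rewrite w_alpha inE.
  rewrite aA; split => //; apply: contraNneq aA => E.
  have : a \subset [set alpha] by rewrite -E subsetUr.
  rewrite subset1 => /orP[//|/eqP a0].
  by case: ha => /simplexP[]; rewrite a0 eqxx.
Qed.

Section Act.
Variable s : {perm 'I_n}.
Local Open Scope group_scope.

Lemma act_partE (t : {perm 'I_n}) (P : part_t n) : act_part t P = [set t @: (B : {set 'I_n}) | B in P].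
Proof. by []. Qed.

Lemma imset_permK (t : {perm 'I_n}) (B : {set 'I_n}) : t^-1 @: (t @: B) = B.
Proof. by rewrite -imset_comp (eq_imset _ (permK t)) imset_id. Qed.

Lemma act_partK (t : {perm 'I_n}) (P : part_t n) : act_part t^-1 (act_part t P) = P.
Proof.
rewrite !act_partE -imset_comp.
by rewrite (eq_imset _ (imset_permK t)) imset_id.
Qed.

Lemma act_part_inj (t : {perm 'I_n}) : injective (act_part t).
Proof. exact: can_inj (act_partK t). Qed.

Lemma imsetT_perm (t : {perm 'I_n}) : t @: [set: 'I_n] = [set: 'I_n].
Proof.
apply/eqP; rewrite eqEcard subsetT card_imset ?leqnn //; exact: perm_inj.
Qed.

Lemma act_setpart (t : {perm 'I_n}) (P : part_t n) : is_setpart (act_part t P) = is_setpart P.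
Proof.
rewrite /is_setpart act_partE -{1}(imsetT_perm t).
by apply: imset_partition; exact: perm_inj.
Qed.

Lemma imsetD1_perm (t : {perm 'I_n}) (B : {set 'I_n}) a : t @: (B :\ a) = t @: B :\ t a.
Proof.
apply/setP => y; rewrite -(permKV t y) !inE !mem_imset ?inE ?(inj_eq perm_inj) //;
  exact: perm_inj.
Qed.

Lemma imsetC_perm (t : {perm 'I_n}) (B : {set 'I_n}) : t @: (~: B) = ~: (t @: B).
Proof.
apply/setP => y; rewrite -(permKV t y) !inE !mem_imset ?inE //; exact: perm_inj.
Qed.

Lemma act_min (t : {perm 'I_n}) : act_part t (part_min n) = part_min n.
Proof.
rewrite act_partE /part_min -imset_comp.
rewrite (eq_imset _ (fun x => imset_set1 t x)) (imset_comp (@set1 _) t).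
apply/setP => D; apply/imsetP/imsetP => [[x _ ->]|[x _ ->]]; first by exists x.
by exists x => //; apply/imsetP; exists (t^-1 x) => //; rewrite permKV.
Qed.

Lemma act_max (t : {perm 'I_n}) : act_part t (part_max n) = part_max n.
Proof. by rewrite act_partE /part_max imset_set1 imsetT_perm. Qed.

Lemma act_proper (t : {perm 'I_n}) (P : part_t n) : proper_part (act_part t P) = proper_part P.
Proof.
rewrite /proper_part act_setpart -{1}(act_min t) -{1}(act_max t).
by rewrite !(inj_eq (@act_part_inj t)).
Qed.

Lemma act_refines (t : {perm 'I_n}) (P Q : part_t n) : refines P Q -> refines (act_part t P) (act_part t Q).
Proof.
move=> /forall_inP h; apply/forall_inP => D; rewrite act_partE => /imsetP[B BP ->].
case/exists_inP: (h B BP) => C CQ BC; apply/exists_inP; exists (t @: C).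
  by rewrite act_partE; apply: imset_f.
exact: imsetS.
Qed.

Lemma act_refinesE (t : {perm 'I_n}) (P Q : part_t n) : refines (act_part t P) (act_part t Q) = refines P Q.
Proof.
apply/idP/idP; last exact: act_refines.
by move/(act_refines t^-1); rewrite !act_partK.
Qed.

Lemma act_Stype1 (t : {perm 'I_n}) (P : part_t n) : t x0 = x0 -> Stype P -> Stype (act_part t P).
Proof.
rewrite /Stype => tx h; rewrite act_partE.
by apply/imsetP; exists [set x0] => //; rewrite imset_set1 tx.
Qed.

Lemma permV_fix (t : {perm 'I_n}) : t x0 = x0 -> t^-1 x0 = x0.
Proof. by move=> h; rewrite -{1}h permK. Qed.

Lemma act_Stype (t : {perm 'I_n}) (P : part_t n) : t x0 = x0 -> Stype (act_part t P) = Stype P.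
Proof.
move=> tx; apply/idP/idP; last exact: act_Stype1.
by move/(act_Stype1 (permV_fix tx)); rewrite act_partK.
Qed.

Lemma act_V (t : {perm 'I_n}) (P : part_t n) : t x0 = x0 -> in_V P -> in_V (act_part t P).
Proof.
move=> tx [x [y [/x0E -> xy ->]]].
exists x0, (t y); split => //.
  by apply: contraNneq xy => /esym; rewrite -{1}tx => /perm_inj ->.
rewrite act_partE imsetU imset_set1 -imset_comp.
rewrite (eq_imset _ (fun x => imset_set1 t x)) (imset_comp (@set1 _) t).
by rewrite imsetC_perm !imsetU1 !imset_set1 tx.
Qed.

Lemma act_fiso (t : {perm 'I_n}) (P : part_t n) : t x0 = x0 ->
  act_part t (fiso P) = fiso (act_part t P).
Proof.
move=> tx; apply/setP => D; rewrite act_partE in_fiso; apply/imsetP/idP.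
  case=> E; rewrite in_fiso => /orP[/eqP-> ->|/andP[En /imsetP[B BP EE]] ->].
    by rewrite imset_set1 tx eqxx.
  subst E; apply/orP; right; rewrite imsetD1_perm tx; apply/andP; split.
    by rewrite -tx -imsetD1_perm imset_eq0.
  by apply/imsetP; exists (t @: B) => //; rewrite act_partE; apply: imset_f.
case/orP => [/eqP->|/andP[Dn /imsetP[B]]].
  by exists [set x0]; rewrite ?in_fiso ?eqxx // imset_set1 tx.
rewrite act_partE => /imsetP[B0 B0P ->] DE.
exists (B0 :\ x0); last by rewrite imsetD1_perm tx.
rewrite in_fiso; apply/orP; right; apply/andP; split; last exact: imset_f.
by move: Dn; rewrite DE -{1}tx -imsetD1_perm imset_eq0.
Qed.

Lemma act_alpha (t : {perm 'I_n}) : t x0 = x0 -> act_part t alpha = alpha.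
Proof.
move=> tx; rewrite act_partE /alpha !imsetU1 !imset_set1 tx imsetC_perm imset_set1 tx //.
Qed.

Lemma act_simplexE (t : {perm 'I_n}) (c : simplex_t n) :
  act_simplex t c = [set act_part t P | P in c].
Proof. by []. Qed.

Lemma mem_act_simplex (t : {perm 'I_n}) (c : simplex_t n) P :
  (act_part t P \in act_simplex t c) = (P \in c).
Proof. by rewrite act_simplexE mem_imset //; exact: act_part_inj. Qed.

Lemma act_F0 (t : {perm 'I_n}) (c : simplex_t n) : t x0 = x0 -> in_F0 c -> in_F0 (act_simplex t c).
Proof.
move=> tx [/simplexP[c0 hp hch] hV]; split.
  apply/simplexP; split.
  - by rewrite act_simplexE imset_eq0.
  - by move=> Q /imsetP[P Pc ->]; rewrite act_proper; apply: hp.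
  - move=> Q R /imsetP[P Pc ->] /imsetP[P' P'c ->]; rewrite !act_refinesE; exact: hch.
move=> Q /imsetP[P Pc ->] /(act_V (permV_fix tx)); rewrite act_partK; exact: hV.
Qed.

Lemma act_Nset (t : {perm 'I_n}) (c : simplex_t n) : t x0 = x0 ->
  Nset (act_simplex t c) = act_simplex t (Nset c).
Proof.
move=> tx; apply/setP => Q; rewrite inE; apply/andP/imsetP.
  case=> /imsetP[P Pc ->]; rewrite act_Stype // => NP.
  by exists P => //; rewrite inE Pc.
case=> P; rewrite inE => /andP[Pc NP] ->.
by rewrite mem_act_simplex act_Stype.
Qed.

Lemma act_minpred (t : {perm 'I_n}) (X : simplex_t n) P :
  minpred (act_simplex t X) (act_part t P) = minpred X P.
Proof.
rewrite /minpred mem_act_simplex; congr andb.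
apply/forall_inP/forall_inP => h Q QX.
  by rewrite -(act_refinesE t) h // mem_act_simplex.
by case/imsetP: QX => Q' Q'X ->; rewrite act_refinesE h.
Qed.

Lemma act_wN (t : {perm 'I_n}) (X : simplex_t n) : t x0 = x0 ->
  (forall P, P \in X -> is_setpart P) ->
  wN (act_simplex t X) = act_part t (wN X).
Proof.
move=> tx hX; rewrite /wN.
case: pickP => [Q hQ|hnone'].
  case: pickP => [P hP|hnone].
    have QP : Q = act_part t P.
      have hP' : minpred (act_simplex t X) (act_part t P) by rewrite act_minpred.
      move: (hQ) hP'.
      case/andP => QX /forall_inP hQm /andP[PX /forall_inP hPm].
      have Qsp : is_setpart Q.
        by case/imsetP: QX => Q' Q'X ->; rewrite act_setpart hX.
      have Psp : is_setpart (act_part t P).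
        by rewrite act_setpart hX //; move: PX; rewrite mem_act_simplex.
      by apply: refines_antisym => //; [apply: hQm | apply: hPm].
    by rewrite QP act_fiso.
  case/andP: (hQ) => /imsetP[Q' _ QE] _.
  by move: hQ; rewrite QE act_minpred hnone.
case: pickP => [P hP|_]; last by rewrite act_alpha.
by move: (hnone' (act_part t P)); rewrite act_minpred hP.
Qed.

Lemma act_w (t : {perm 'I_n}) (c : simplex_t n) : t x0 = x0 -> in_F0 c ->
  w (act_simplex t c) = act_part t (w c).
Proof.
move=> tx [/simplexP[_ hp _] _]; rewrite /w act_Nset // act_wN //.
by move=> P; rewrite inE => /andP[Pc _]; apply: proper_setpart; apply: hp.
Qed.
End Act.

Lemma Mset_equivariant : equivariant_F0 Mset.
Proof.
move=> t ht [a b] /inM[ha -> hw] /=.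
have tx : t x0 = x0 by apply: ht.
apply/inM; split.
- exact: act_F0.
- by rewrite act_w // act_simplexE imsetU1.
- by rewrite act_w // mem_act_simplex.
Qed.
End Main.

Theorem lemma12 (n : nat) (hn : 3 <= n) :
  exists M : {set simplex_t n * simplex_t n},
    [/\ matching_F0 M, acyclic_F0 M, equivariant_F0 M &
        forall c : simplex_t n, critical_F0 M c <->
          exists P : part_t n, is_alpha P /\ c = [set P]].
Proof.
pose x0 : 'I_n := Ordinal (ltn_trans (isT : 0 < 2) hn).
have hx0 : val x0 = 0 by [].
exists (Mset x0); split.
- exact: Mset_matching hx0 hn.
- exact: Mset_acyclic.
- exact: Mset_equivariant hx0.
- exact: Mset_critical hx0 hn.
Qed.
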